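(* Let $q=2$ and $z>4$. Consider the mean-field equation in $u\in[0,1)$, $$u=\frac{1-\exp(\Delta_{\beta,2,z}(u))}{1+\exp(\Delta_{\beta,2,z}(u))},\qquad\Delta_{\beta,2,z}(u):=-\frac{\beta}{2^{z-1}}\Big[(1+u)^{z-1}-(1-u)^{z-1}\Big].$$ There exist $0<\beta_0(2,z)<\beta_1(2,z)$ such that: for $0<\beta<\beta_0$ the mean-field equation has only the trivial solution $u=0$; for $\beta_0<\beta<\beta_1$ it has exactly two additional solutions $0<u_1<u_2<1$; for $\beta=\beta_0$ or $\beta\geq\beta_1$ it has exactly one additional solution $0<u_2<1$. *)

(* Defs.v *)
From Stdlib Require Import Reals.
Open Scope R_scope.

Definition Delta (beta : R) (z : nat) (u : R) : R :=
  - (beta / 2 ^ (z - 1)) * ((1 + u) ^ (z - 1) - (1 - u) ^ (z - 1)).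

Definition mf_rhs (beta : R) (z : nat) (u : R) : R :=
  (1 - exp (Delta beta z u)) / (1 + exp (Delta beta z u)).

Definition mf_solution (beta : R) (z : nat) (u : R) : Prop :=
  0 <= u < 1 /\ u = mf_rhs beta z u.

(* Main.v *)
Require Import Defs.
From Stdlib Require Import Reals Lra Lia Ranalysis5.
From Coquelicot Require Import Coquelicot.
Open Scope R_scope.

Definition Rr n x := - x^n + INR n * x^n / x - INR n * x + 1.
Definition R1 n x := INR n * (INR n - 1) * x^n / (x*x) - INR n * x^n / x - INR n.
Definition R2 n x := INR n * (INR n - 1) * x^n / (x*x*x) * (INR n - 2 - x).
Definition Tf n x := (x^n + x) / ((x+1)^n * (x+1)).
Definition Tp n x := Rr n x / ((x+1)^n * (x+1) * (x+1)).
Definition Ef n b x := b*((x^n-1)/(x+1)^n) - ln x.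
Definition Phi n b x := b * INR n * Tf n x - 1.
Definition Phip n b x := b * INR n * Tp n x.
Definition Ep n b x := Phi n b x / x.

Lemma dp n y : y <> 0 -> INR n * y^(pred n) = INR n * y^n / y.
Proof. intros h. destruct n. simpl. field. auto. simpl pred. simpl pow. field. auto. Qed.

Lemma powpos n x : 0 < x -> 0 < x^n.
Proof. intros; apply pow_lt; auto. Qed.

Ltac fin x := (rewrite ?(dp _ x), ?(dp _ (x+1)) by lra;
  assert (0 < x^_) by (apply powpos; lra);
  try assert (0 < (x+1)^_) by (apply powpos; lra)).

Lemma dR1 n x : 0 < x -> is_derive (R1 n) x (R2 n x).
Proof. intros hx. unfold R1, R2. auto_derive. repeat split; nra.
 rewrite (dp _ x) by lra. field. lra. Qed.

Lemma dRr n x : 0 < x -> is_derive (Rr n) x (R1 n x).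
Proof. intros hx. unfold Rr, R1. auto_derive. repeat split; nra.
 rewrite (dp _ x) by lra. field. lra. Qed.

Lemma dT n x : 0 < x -> is_derive (Tf n) x (Tp n x).
Proof. intros hx. unfold Tf, Tp, Rr. assert (0 < (x+1)^n) by (apply powpos; lra).
 auto_derive. repeat split; nra.
 rewrite (dp _ x), (dp _ (x+1)) by lra. field. lra. Qed.

Lemma dE n b x : 0 < x -> is_derive (Ef n b) x (Ep n b x).
Proof. intros hx. unfold Ef, Ep, Phi, Tf. assert (0 < (x+1)^n) by (apply powpos; lra).
 auto_derive. repeat split; try lra.
 rewrite (dp _ x), (dp _ (x+1)) by lra. field. lra. Qed.

Lemma dPhi n b x : 0 < x -> is_derive (Phi n b) x (Phip n b x).
Proof. intros hx. unfold Phi, Phip.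
 replace (b * INR n * Tp n x) with (b * INR n * Tp n x - 0) by ring.
 apply (is_derive_minus (fun x => b*INR n*Tf n x) (fun _ => 1) x (b*INR n*Tp n x) 0).
 apply (is_derive_scal (Tf n)). now apply dT. auto_derive; auto. Qed.

Definition Dr (f f' : R -> R) a := forall x, a <= x -> derivable_pt_lim f x (f' x).

Lemma incr f f' s t : s < t -> (forall c, s<=c<=t -> derivable_pt_lim f c (f' c)) ->
  (forall c, s<c<t -> 0 < f' c) -> f s < f t.
Proof. intros st hd hp. destruct (MVT_cor2 f f' s t st hd) as [c [e hc]].
 specialize (hp c hc). nra. Qed.

Lemma decr f f' s t : s < t -> (forall c, s<=c<=t -> derivable_pt_lim f c (f' c)) ->
  (forall c, s<c<t -> f' c < 0) -> f t < f s.
Proof. intros st hd hp. destruct (MVT_cor2 f f' s t st hd) as [c [e hc]].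
 specialize (hp c hc). nra. Qed.

Lemma Dr_cont f f' a x : Dr f f' a -> a <= x -> continuity_pt f x.
Proof. intros h hx. apply derivable_continuous_pt. exists (f' x). now apply h. Qed.

Lemma IVT_neg f s t : (forall c, s <= c <= t -> continuity_pt f c) -> s < t ->
  0 < f s -> f t < 0 -> exists e, s < e < t /\ f e = 0.
Proof. intros hc st h1 h2.
 destruct (IVT_interv (fun x => - f x) s t) as [e [he fe]]; auto.
 intros c hc'. apply continuity_pt_opp. auto. lra. lra.
 exists e. assert (f e = 0) by lra. split; auto.
 destruct he as [he1 he2]. split.
 destruct he1; auto. subst; lra. destruct he2; auto. subst; lra. Qed.

Lemma IVT_pos f s t : (forall c, s <= c <= t -> continuity_pt f c) -> s < t ->
  f s < 0 -> 0 < f t -> exists e, s < e < t /\ f e = 0.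
Proof. intros hc st h1 h2.
 destruct (IVT_interv f s t) as [e [he fe]]; auto.
 exists e. split; auto.
 destruct he as [he1 he2]. split.
 destruct he1; auto. subst; lra. destruct he2; auto. subst; lra. Qed.

Definition SignPM (f : R -> R) a := exists d, a < d /\ (forall x, a < x < d -> 0 < f x) /\
  (forall x, d < x -> f x < 0).

Definition Shape3 (f : R -> R) a p q := a <= p /\ p <= q /\ (forall x, a < x < p -> f x < 0) /\
  (forall x, p < x < q -> 0 < f x) /\ (forall x, q < x -> f x < 0).

Definition EvNeg (f : R -> R) := forall Y, exists X, Y < X /\ f X < 0.

Lemma step f f' a : Dr f f' a -> SignPM f' a -> 0 <= f a -> EvNeg f ->
  SignPM f a.
Proof. intros hd [d [ad [h1 h2]]] hfa hX. destruct (hX d) as [X [dX fX]].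
 assert (inc : forall x, a < x <= d -> f a < f x).
 { intros x hx. apply (incr f f'). lra. intros; apply hd; lra. intros; apply h1; lra. }
 assert (dec : forall x y, d <= x < y -> f y < f x).
 { intros x y hx. apply (decr f f'). lra. intros; apply hd; lra. intros; apply h2; lra. }
 assert (fd : 0 < f d) by (assert (f a < f d) by (apply inc; lra); lra).
 destruct (IVT_neg f d X) as [e [he fe]]; auto.
 intros; apply (Dr_cont f f' a); auto; lra.
 exists e. repeat split; try lra.
 intros x hx. destruct (Rle_lt_dec x d). assert (f a < f x) by (apply inc; lra); lra.
 assert (f e < f x) by (apply dec; lra); lra.
 intros x hx. assert (f x < f e) by (apply dec; lra); lra. Qed.

Lemma shape_pos f a : SignPM f a -> exists q, a < q /\ Shape3 f a a q.
Proof. intros [d [ad [h1 h2]]]. exists d. split; auto. repeat split; try lra.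
 intros x hx; lra. auto. auto. Qed.

Lemma shape_neg f f' a : Dr f f' a -> SignPM f' a -> f a < 0 -> EvNeg f ->
  exists p q, a < p /\ Shape3 f a p q.
Proof. intros hd [d [ad [h1 h2]]] hfa hX.
 assert (inc : forall x y, a <= x < y -> y <= d -> f x < f y).
 { intros x y hx hy. apply (incr f f'). lra. intros; apply hd; lra. intros; apply h1; lra. }
 assert (dec : forall x y, d <= x < y -> f y < f x).
 { intros x y hx. apply (decr f f'). lra. intros; apply hd; lra. intros; apply h2; lra. }
 destruct (Rle_lt_dec (f d) 0) as [fd|fd].
 - exists d, d. split; auto. repeat split; try lra.
   intros x hx. assert (f x < f d) by (apply inc; lra). lra.
   intros x hx; lra.
   intros x hx. assert (f x < f d) by (apply dec; lra). lra.
 - destruct (hX d) as [X [dX fX]].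
   destruct (IVT_pos f a d) as [p [hp fp]]; auto. intros; apply (Dr_cont f f' a); auto; lra.
   destruct (IVT_neg f d X) as [q [hq fq]]; auto. intros; apply (Dr_cont f f' a); auto; lra.
   exists p, q. split; [lra|]. repeat split; try lra.
   intros x hx. assert (f x < f p) by (apply inc; lra). lra.
   intros x hx. destruct (Rle_lt_dec x d).
   assert (f p < f x) by (apply inc; lra). lra.
   assert (f q < f x) by (apply dec; lra). lra.
   intros x hx. assert (f x < f q) by (apply dec; lra). lra. Qed.

Section Z.
Variables (E E' : R -> R) (a p q : R).
Hypothesis hd : Dr E E' a.
Hypothesis hs : Shape3 E' a p q.
Hypothesis ha : E a = 0.

Lemma dec1 x y : a <= x < y -> y <= p -> E y < E x.
Proof. destruct hs as [h0 [h1 [h2 [h3 h4]]]]. intros. apply (decr E E'). lra.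
 intros; apply hd; lra. intros; apply h2; lra. Qed.
Lemma inc2 x y : p <= x < y -> y <= q -> E x < E y.
Proof. destruct hs as [h0 [h1 [h2 [h3 h4]]]]. intros. apply (incr E E'). lra.
 intros; apply hd; lra. intros; apply h3; lra. Qed.
Lemma dec3 x y : q <= x < y -> E y < E x.
Proof. destruct hs as [h0 [h1 [h2 [h3 h4]]]]. intros. apply (decr E E'). lra.
 intros; apply hd; lra. intros; apply h4; lra. Qed.

Lemma Z1 x : a < x <= p -> E x < 0.
Proof. intros. rewrite <- ha. apply dec1; lra. Qed.

Lemma Zgt y : a < y -> E y = 0 -> p < y.
Proof. intros h e. destruct (Rle_lt_dec y p); auto. assert (E y < 0) by (apply Z1; lra). lra. Qed.

Lemma Z2 : p = a -> forall y1 y2, a < y1 -> a < y2 -> E y1 = 0 -> E y2 = 0 -> y1 = y2.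
Proof. destruct hs as [h0 [h1 _]]. intros hp y1 y2 a1 a2 e1 e2.
 assert (g : forall y, a < y -> E y = 0 -> q < y).
 { intros y hy ey. destruct (Rle_lt_dec y q); auto. assert (E a < E y) by (apply inc2; lra). lra. }
 pose proof (g _ a1 e1). pose proof (g _ a2 e2).
 destruct (Rtotal_order y1 y2) as [l|[l|l]]; auto.
 assert (E y2 < E y1) by (apply dec3; lra); lra.
 assert (E y1 < E y2) by (apply dec3; lra); lra. Qed.

Lemma Z3 y1 y2 y3 : a < y1 -> a < y2 -> a < y3 -> E y1 = 0 -> E y2 = 0 -> E y3 = 0 ->
  y1 = y2 \/ y1 = y3 \/ y2 = y3.
Proof. destruct hs as [h0 [h1 _]]. intros a1 a2 a3 e1 e2 e3.
 pose proof (Zgt _ a1 e1). pose proof (Zgt _ a2 e2). pose proof (Zgt _ a3 e3).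
 assert (same : forall u v, a < u -> a < v -> E u = 0 -> E v = 0 ->
    (u <= q /\ v <= q) \/ (q < u /\ q < v) -> u = v).
 { intros u v au av eu ev hh. pose proof (Zgt _ au eu). pose proof (Zgt _ av ev).
   destruct (Rtotal_order u v) as [l|[l|l]]; auto.
   destruct hh as [[]|[]]. assert (E u < E v) by (apply inc2; lra). lra.
   assert (E v < E u) by (apply dec3; lra). lra.
   destruct hh as [[]|[]]. assert (E v < E u) by (apply inc2; lra). lra.
   assert (E u < E v) by (apply dec3; lra). lra. }
 destruct (Rle_lt_dec y1 q); destruct (Rle_lt_dec y2 q); destruct (Rle_lt_dec y3 q).
 all: first [ left; apply same; auto; lra | right; left; apply same; auto; lra
            | right; right; apply same; auto; lra ]. Qed.

Lemma Z4 : (forall x, a < x -> E x <= 0) -> forall y, a < y -> E y = 0 -> y = q.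
Proof. destruct hs as [h0 [h1 _]]. intros hle y ay ey. pose proof (Zgt _ ay ey).
 destruct (Rtotal_order y q) as [l|[l|l]]; auto.
 assert (E y < E q) by (apply inc2; lra). assert (E q <= 0) by (apply hle; lra). lra.
 assert (E y < E q) by (apply dec3; lra). assert (E q <= 0) by (destruct (Rle_lt_dec q a); [replace q with a by lra; lra | apply hle; lra]). lra. Qed.
End Z.

Lemma Drc f f' a : (forall x, 0 < x -> is_derive f x (f' x)) -> 0 < a -> Dr f f' a.
Proof. intros h ha x hx. apply is_derive_Reals. apply h. lra. Qed.

Lemma INR4 n : (4 <= n)%nat -> 4 <= INR n.
Proof. intros h. apply le_INR in h. simpl in h. lra. Qed.

Lemma pow_ge_x n x : (1 <= n)%nat -> 1 <= x -> x <= x ^ n.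
Proof. intros hn hx. destruct n. lia. simpl. 
 assert (1 <= x^n) by (apply pow_R1_Rle; lra). nra. Qed.

Lemma R2_sign n : (4 <= n)%nat -> SignPM (R2 n) 1.
Proof. intros hn. pose proof (INR4 n hn). exists (INR n - 2). split. lra. split.
 - intros x hx. unfold R2. assert (0 < x^n / (x*x*x)).
   { apply Rdiv_lt_0_compat. apply powpos; lra. assert (0 < x*x) by nra. nra. }
   replace (INR n * (INR n - 1) * x ^ n / (x * x * x) * (INR n - 2 - x)) with
    ((INR n * (INR n - 1) * (x ^ n / (x * x * x))) * (INR n - 2 - x)) by (unfold Rdiv; ring).
   apply Rmult_lt_0_compat. apply Rmult_lt_0_compat. apply Rmult_lt_0_compat. lra. lra. auto. lra.
 - intros x hx. unfold R2. assert (0 < x^n / (x*x*x)).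
   { apply Rdiv_lt_0_compat. apply powpos; lra. assert (0 < x*x) by nra. nra. }
   assert (0 < INR n * (INR n - 1) * (x ^ n / (x * x * x))).
   { apply Rmult_lt_0_compat. apply Rmult_lt_0_compat; lra. auto. }
   replace (INR n * (INR n - 1) * x ^ n / (x * x * x) * (INR n - 2 - x)) with
    ((INR n * (INR n - 1) * (x ^ n / (x * x * x))) * (INR n - 2 - x)) by (unfold Rdiv; ring).
   nra. Qed.

Lemma R1_sign n : (4 <= n)%nat -> SignPM (R1 n) 1.
Proof. intros hn. pose proof (INR4 n hn). apply (step _ (R2 n)).
 - apply Drc. intros; apply dR1; auto. lra.
 - apply R2_sign; auto.
 - unfold R1. rewrite pow1. replace (INR n * (INR n - 1) * 1 / (1 * 1) - INR n * 1 / 1 - INR n)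
   with (INR n * (INR n - 3)) by field. nra.
 - intros Y. exists (Rmax Y (INR n) + 1). split. pose proof (Rmax_l Y (INR n)); lra.
   set (x := Rmax Y (INR n) + 1). assert (INR n + 1 <= x) by (pose proof (Rmax_r Y (INR n)); unfold x; lra).
   unfold R1. assert (0 < x^n / (x*x)).
   { apply Rdiv_lt_0_compat. apply powpos; lra. nra. }
   replace (INR n * (INR n - 1) * x ^ n / (x * x) - INR n * x ^ n / x - INR n) with
     (INR n * (x ^ n / (x * x)) * (INR n - 1 - x) - INR n) by (field; lra).
   assert (0 < INR n * (x ^ n / (x * x))) by (apply Rmult_lt_0_compat; lra).
   nra. Qed.

Lemma Rr_sign n : (4 <= n)%nat -> SignPM (Rr n) 1.
Proof. intros hn. pose proof (INR4 n hn). apply (step _ (R1 n)).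
 - apply Drc. intros; apply dRr; auto. lra.
 - apply R1_sign; auto.
 - unfold Rr. rewrite pow1. lra.
 - intros Y. exists (Rmax Y (INR n) + 1). split. pose proof (Rmax_l Y (INR n)); lra.
   set (x := Rmax Y (INR n) + 1). assert (INR n + 1 <= x) by (pose proof (Rmax_r Y (INR n)); unfold x; lra).
   unfold Rr. assert (0 < x^n / x).
   { apply Rdiv_lt_0_compat. apply powpos; lra. lra. }
   replace (- x ^ n + INR n * x ^ n / x - INR n * x + 1) with
     ((x ^ n / x) * (INR n - x) - INR n * x + 1) by (field; lra).
   nra. Qed.

Lemma Phip_sign n b : (4 <= n)%nat -> 0 < b -> SignPM (Phip n b) 1.
Proof. intros hn hb. pose proof (INR4 n hn). destruct (Rr_sign n hn) as [d [hd [h1 h2]]].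
 exists d. split; auto. split.
 - intros x hx. unfold Phip, Tp. specialize (h1 x hx).
   assert (0 < (x+1)^n) by (apply powpos; lra).
   assert (0 < Rr n x / ((x + 1) ^ n * (x + 1) * (x + 1))).
   { apply Rdiv_lt_0_compat; auto. assert (0 < (x+1)^n*(x+1)) by nra. nra. }
   assert (0 < b * INR n) by nra. nra.
 - intros x hx. unfold Phip, Tp. specialize (h2 x hx).
   assert (0 < (x+1)^n) by (apply powpos; lra).
   assert (Rr n x / ((x + 1) ^ n * (x + 1) * (x + 1)) < 0).
   { unfold Rdiv. assert (0 < (x+1)^n*(x+1)*(x+1)) by (assert (0 < (x+1)^n*(x+1)) by nra; nra).
     assert (0 < / ((x + 1) ^ n * (x + 1) * (x + 1))) by (apply Rinv_0_lt_compat; auto). nra. }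
   assert (0 < b * INR n) by nra. nra. Qed.

Lemma Phi_evneg n b : (4 <= n)%nat -> 0 < b -> EvNeg (Phi n b).
Proof. intros hn hb. pose proof (INR4 n hn). assert (0 < b*INR n) by nra. intros Y.
 exists (Rmax Y (2*b*INR n) + 2). split. pose proof (Rmax_l Y (2*b*INR n)); lra.
 set (x := Rmax Y (2*b*INR n) + 2). assert (2*b*INR n + 2 <= x) by (pose proof (Rmax_r Y (2*b*INR n)); unfold x; lra).
 assert (x <= x^n) by (apply pow_ge_x; lia || lra).
 assert (x^n <= (x+1)^n) by (apply pow_incr; lra).
 assert (0 < x^n) by (apply powpos; lra).
 unfold Phi, Tf. 
 assert (0 < (x+1)^n*(x+1)) by nra.
 assert (b * INR n * (x^n + x) < (x+1)^n*(x+1)) by nra.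
 assert (b * INR n * ((x ^ n + x) / ((x + 1) ^ n * (x + 1))) < 1).
 { replace (b * INR n * ((x ^ n + x) / ((x + 1) ^ n * (x + 1)))) with
    ((b * INR n * (x ^ n + x)) / ((x + 1) ^ n * (x + 1))) by (field; lra).
   apply (Rmult_lt_reg_r ((x + 1) ^ n * (x + 1))); auto. field_simplify; lra. }
 lra. Qed.

Definition beta1 n := 2^n / INR n.

Lemma Phi1 n b : (4 <= n)%nat -> Phi n b 1 = b / beta1 n - 1.
Proof. intros hn. pose proof (INR4 n hn). unfold Phi, Tf, beta1. rewrite pow1.
 replace (1+1) with 2 by ring. assert (0 < 2^n) by (apply powpos; lra). field. lra. Qed.

Lemma Eshape n b : (4 <= n)%nat -> 0 < b -> exists p q, Shape3 (Ep n b) 1 p q /\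
  (b < beta1 n -> 1 < p) /\ (beta1 n <= b -> p = 1 /\ 1 < q).
Proof. intros hn hb. pose proof (INR4 n hn).
 assert (0 < beta1 n) by (unfold beta1; apply Rdiv_lt_0_compat; [apply powpos|]; lra).
 assert (conv : forall p q, Shape3 (Phi n b) 1 p q -> Shape3 (Ep n b) 1 p q).
 { intros p q [h0 [h1 [h2 [h3 h4]]]]. unfold Ep. repeat split; auto; intros x hx.
   - specialize (h2 x hx). unfold Rdiv. assert (0 < / x) by (apply Rinv_0_lt_compat; lra). nra.
   - specialize (h3 x hx). apply Rdiv_lt_0_compat; lra.
   - specialize (h4 x hx). unfold Rdiv. assert (0 < / x) by (apply Rinv_0_lt_compat; lra). nra. }
 destruct (Rlt_le_dec b (beta1 n)) as [hl|hl].
 - destruct (shape_neg (Phi n b) (Phip n b) 1) as [p [q [hp hs]]].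
   apply Drc. intros; apply dPhi; auto. lra. apply Phip_sign; auto.
   rewrite Phi1 by auto. assert (b / beta1 n < 1). { apply (Rmult_lt_reg_r (beta1 n)); auto. field_simplify; lra. } lra.
   apply Phi_evneg; auto.
   exists p, q. split; auto. split; intros; auto. lra.
 - destruct (shape_pos (Phi n b) 1) as [q [hq hs]].
   apply (step _ (Phip n b)). apply Drc. intros; apply dPhi; auto. lra. apply Phip_sign; auto.
   rewrite Phi1 by auto. assert (1 <= b / beta1 n). { apply (Rmult_le_reg_r (beta1 n)); auto. field_simplify; lra. } lra.
   apply Phi_evneg; auto.
   exists 1, q. split; auto. split; intros; auto. lra. Qed.

Definition av n x := (x^n - 1)/(x+1)^n.
Definition hf n x := ln x / av n x.

Lemma av_pos n x : (4 <= n)%nat -> 1 < x -> 0 < av n x < 1.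
Proof. intros hn hx. unfold av. assert (1 < x^n) by (apply Rlt_pow_R1; lia || lra).
 assert (x^n <= (x+1)^n) by (apply pow_incr; lra).
 split. apply Rdiv_lt_0_compat; lra.
 apply (Rmult_lt_reg_r ((x+1)^n)). lra. field_simplify; lra. Qed.

Lemma Ef_h n b x : (4 <= n)%nat -> 1 < x -> Ef n b x = av n x * (b - hf n x).
Proof. intros hn hx. pose proof (av_pos n x hn hx). unfold hf. unfold Ef. fold (av n x).
 field. lra. Qed.

Lemma Ef1 n b : Ef n b 1 = 0.
Proof. unfold Ef. rewrite pow1, ln_1. field. apply pow_nonzero. lra. Qed.

Lemma hf_cont n x : (4 <= n)%nat -> 1 < x -> continuity_pt (hf n) x.
Proof. intros hn hx. pose proof (av_pos n x hn hx).
 apply derivable_continuous_pt, ex_derive_Reals_0. unfold hf, av in *.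
 auto_derive. assert (0 < (x+1)^n) by (apply powpos; lra). repeat split; lra. Qed.

Lemma Ef_cont n b s t : 1 <= s -> forall c, s <= c <= t -> continuity_pt (Ef n b) c.
Proof. intros hs c hc. apply (Dr_cont _ (Ep n b) 1). apply Drc. intros; apply dE; auto. lra. lra. Qed.

Lemma ln_big c x : exp c < x -> c < ln x.
Proof. intros h. rewrite <- (ln_exp c). apply ln_increasing. apply exp_pos. auto. Qed.

Lemma E_large n b : (4 <= n)%nat -> 0 < b -> forall Y, exists X, Y < X /\ Ef n b X < 0.
Proof. intros hn hb Y. exists (Rmax Y (exp (b+1)) + 1). 
 pose proof (Rmax_l Y (exp (b+1))). pose proof (Rmax_r Y (exp (b+1))).
 pose proof (exp_pos (b+1)). set (X := Rmax Y (exp (b+1)) + 1) in *.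
 split. unfold X; lra.
 assert (b + 1 < ln X) by (apply ln_big; unfold X; lra).
 assert (1 < X). { assert (exp 0 < exp (b+1)) by (apply exp_increasing; lra). rewrite exp_0 in *. unfold X; lra. }
 rewrite (Ef_h n b X hn) by auto. pose proof (av_pos n X hn H3).
 unfold hf. replace (av n X * (b - ln X / av n X)) with (av n X * b - ln X) by (field; lra).
 nra. Qed.

Lemma hf_big n x c : (4 <= n)%nat -> 1 < x -> 0 <= c -> exp c < x -> c < hf n x.
Proof. intros hn hx hc he. pose proof (av_pos n x hn hx). pose proof (ln_big c x he).
 unfold hf. apply (Rmult_lt_reg_r (av n x)). lra. field_simplify; nra. Qed.

Lemma DrE n b : Dr (Ef n b) (Ep n b) 1.
Proof. apply Drc. intros; apply dE; auto. lra. Qed.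

Theorem core n : (4 <= n)%nat -> exists b0 b1, 0 < b0 < b1 /\
  (forall b, 0 < b < b0 -> forall x, 1 < x -> Ef n b x <> 0) /\
  (forall b, b0 < b < b1 -> exists x1 x2, 1 < x1 < x2 /\ Ef n b x1 = 0 /\ Ef n b x2 = 0 /\
      forall x, 1 < x -> Ef n b x = 0 -> x = x1 \/ x = x2) /\
  (forall b, b = b0 \/ b1 <= b -> exists x2, 1 < x2 /\ Ef n b x2 = 0 /\
      forall x, 1 < x -> Ef n b x = 0 -> x = x2).
Proof. intros hn. pose proof (INR4 n hn).
 assert (hb1 : 0 < beta1 n) by (unfold beta1; apply Rdiv_lt_0_compat; [apply powpos|]; lra).
 destruct (Eshape n (beta1 n) hn hb1) as [p1 [xs [hs1 [_ hb]]]].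
 destruct (hb (Rle_refl _)) as [ep1 hxs]. subst p1. clear hb.
 assert (Exs : 0 < Ef n (beta1 n) xs).
 { rewrite <- (Ef1 n (beta1 n)). apply (inc2 _ _ 1 1 xs (DrE n _) hs1); lra. }
 set (bs := hf n xs).
 pose proof (av_pos n xs hn hxs).
 assert (bsb1 : bs < beta1 n). { rewrite Ef_h in Exs by auto. fold bs in Exs. nra. }
 assert (bspos : 0 < bs). { unfold bs, hf. apply Rdiv_lt_0_compat. rewrite <- ln_1. apply ln_increasing; lra. lra. }
 destruct (Eshape n bs hn bspos) as [ps [qs [hss [hps _]]]].
 specialize (hps bsb1).
 assert (near1 : forall x, 1 < x <= ps -> bs < hf n x).
 { intros x hx. pose proof (Z1 _ _ 1 ps qs (DrE n bs) hss (Ef1 n bs) x hx) as hz.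
   rewrite Ef_h in hz by (first [assumption|lra]). pose proof (av_pos n x hn (proj1 hx)). nra. }
 assert (Exs0 : Ef n bs xs = 0). { rewrite Ef_h by auto. fold bs. ring. }
 pose proof (Zgt _ _ 1 ps qs (DrE n bs) hss (Ef1 n bs) xs hxs Exs0) as psxs.
 set (X := exp bs + 1).
 assert (far : forall x, X <= x -> bs < hf n x).
 { intros x hx. apply hf_big; auto. assert (exp 0 < exp bs) by (apply exp_increasing; lra).
   rewrite exp_0 in *. unfold X in hx; lra. lra. unfold X in hx; lra. }
 assert (xsX : xs < X). { destruct (Rlt_le_dec xs X); auto. pose proof (far xs r) as hz. unfold bs in hz. lra. }
 destruct (continuity_ab_min (hf n) ps X) as [x0 [hmin hx0]]. lra.
 intros c hc. apply hf_cont; auto; lra.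
 set (b0 := hf n x0).
 assert (glob : forall x, 1 < x -> b0 <= hf n x).
 { intros x hx. destruct (Rle_lt_dec x ps).
   - pose proof (near1 x (conj hx r)). pose proof (hmin xs (conj (Rlt_le _ _ psxs) (Rlt_le _ _ xsX))) as hz.
     unfold b0; fold bs in hz. lra.
   - destruct (Rle_lt_dec X x).
     + pose proof (far x r0). pose proof (hmin xs (conj (Rlt_le _ _ psxs) (Rlt_le _ _ xsX))) as hz.
       unfold b0; fold bs in hz. lra.
     + apply hmin; lra. }
 assert (b0bs : b0 <= bs) by (apply hmin; lra).
 assert (hx01 : 1 < x0) by lra.
 assert (b0pos : 0 < b0). { unfold b0, hf. pose proof (av_pos n x0 hn hx01). apply Rdiv_lt_0_compat. rewrite <- ln_1. apply ln_increasing; lra. lra. }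
 exists b0, (beta1 n). split. lra. split; [|split].
 - intros b hb x hx e. rewrite Ef_h in e by auto. pose proof (av_pos n x hn hx).
   pose proof (glob x hx). assert (b - hf n x = 0). { apply (Rmult_eq_reg_l (av n x)). lra. lra. } lra.
 - intros b hb. assert (bpos : 0 < b) by lra.
   destruct (Eshape n b hn bpos) as [p [q [hs [hp _]]]]. specialize (hp (proj2 hb)).
   assert (Ep0 : Ef n b p < 0) by (apply (Z1 _ _ 1 p q (DrE n b) hs (Ef1 n b)); lra).
   assert (Ex0 : 0 < Ef n b x0). { rewrite Ef_h by auto. pose proof (av_pos n x0 hn hx01). fold b0. nra. }
   assert (px0 : p < x0). { destruct (Rlt_le_dec p x0); auto.
     assert (Ef n b x0 < 0) by (apply (Z1 _ _ 1 p q (DrE n b) hs (Ef1 n b)); lra). lra. }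
   destruct (IVT_pos (Ef n b) p x0) as [y1 [hy1 ey1]]; auto. apply Ef_cont; lra.
   destruct (E_large n b hn bpos x0) as [X' [hX' eX']].
   destruct (IVT_neg (Ef n b) x0 X') as [y2 [hy2 ey2]]; auto. apply Ef_cont; lra.
   exists y1, y2. split. lra. split; auto. split; auto.
   intros x hx ex.
   destruct (Z3 _ _ 1 p q (DrE n b) hs (Ef1 n b) x y1 y2) as [h|[h|h]]; auto; try lra.
 - intros b hb. assert (bpos : 0 < b) by (destruct hb; lra).
   destruct (Eshape n b hn bpos) as [p [q [hs [_ hp]]]].
   destruct hb as [hb|hb].
   + subst b. exists x0. assert (Ex0 : Ef n b0 x0 = 0) by (rewrite Ef_h by auto; fold b0; ring).
     split; auto. split; auto.
     assert (le0 : forall x, 1 < x -> Ef n b0 x <= 0).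
     { intros x hx. rewrite Ef_h by auto. pose proof (av_pos n x hn hx). pose proof (glob x hx). nra. }
     intros x hx ex. pose proof (Z4 _ _ 1 p q (DrE n b0) hs (Ef1 n b0) le0 x hx ex).
     pose proof (Z4 _ _ 1 p q (DrE n b0) hs (Ef1 n b0) le0 x0 hx01 Ex0). lra.
   + destruct (hp hb) as [ep _].
     assert (Exs' : 0 < Ef n b xs). { rewrite Ef_h by auto. fold bs. nra. }
     destruct (E_large n b hn bpos xs) as [X' [hX' eX']].
     destruct (IVT_neg (Ef n b) xs X') as [y [hy ey]]; auto. apply Ef_cont; lra.
     exists y. split. lra. split; auto. intros x hx ex.
     apply (Z2 _ _ 1 p q (DrE n b) hs (Ef1 n b) ep); auto; lra. Qed.

Lemma Delta_x (b : R) (z : nat) (u : R) : 0 <= u < 1 ->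
  Defs.Delta b z u = - (b * (((((1+u)/(1-u))^(z-1) - 1) / (((1+u)/(1-u)) + 1)^(z-1)))).
Proof. intros hu. unfold Defs.Delta. set (n := (z-1)%nat). set (x := (1+u)/(1-u)).
 assert (e1 : 1 + u = x * (1-u)) by (unfold x; field; lra).
 assert (e2 : (x+1) * (1-u) = 2) by (unfold x; field; lra).
 assert (p1 : (1+u)^n = x^n * (1-u)^n) by (rewrite e1; apply Rpow_mult_distr).
 assert (p2 : (x+1)^n * (1-u)^n = 2^n) by (rewrite <- Rpow_mult_distr, e2; auto).
 assert (0 < (1-u)^n) by (apply powpos; lra).
 assert (0 < 2^n) by (apply powpos; lra).
 assert (0 < (x+1)^n) by (apply powpos; nra).
 rewrite p1. rewrite <- p2. field. split; lra. Qed.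

Lemma equiv (b : R) (z : nat) (u : R) : 0 <= u < 1 ->
  (u = mf_rhs b z u <-> Ef (z-1) b ((1+u)/(1-u)) = 0).
Proof. intros hu. set (x := (1+u)/(1-u)).
 assert (hx : 1 <= x). { unfold x. apply (Rmult_le_reg_r (1-u)). lra. field_simplify; lra. }
 assert (Dx : Defs.Delta b z u = - (b * ((x^(z-1) - 1)/(x+1)^(z-1)))) by (apply Delta_x; auto).
 unfold mf_rhs, Ef. fold x. rewrite Dx. set (D := - (b * ((x ^ (z - 1) - 1) / (x + 1) ^ (z - 1)))).
 pose proof (exp_pos D) as he.
 assert (ix : / x = (1-u)/(1+u)) by (unfold x; field; lra).
 assert (key : u = (1 - exp D)/(1 + exp D) <-> exp D = / x).
 { rewrite ix. split; intro h.
   - assert (u * (1 + exp D) = 1 - exp D) by (rewrite h; field; lra).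
     apply (Rmult_eq_reg_r (1+u)). field_simplify; nra. lra.
   - rewrite h. field. lra. }
 assert (key2 : exp D = / x <-> D = - ln x).
 { split; intro h.
   - rewrite <- ln_Rinv by lra. rewrite <- h. now rewrite ln_exp.
   - rewrite h, exp_Ropp, exp_ln by lra. auto. }
 rewrite key, key2. unfold D. split; intro h; lra. Qed.

Lemma toX u : 0 <= u < 1 -> 1 <= (1+u)/(1-u) /\ u = ((1+u)/(1-u) - 1)/((1+u)/(1-u) + 1) /\
   (0 < u -> 1 < (1+u)/(1-u)).
Proof. intros hu. split; [|split].
 apply (Rmult_le_reg_r (1-u)). lra. field_simplify; lra.
 field. lra.
 intros h. apply (Rmult_lt_reg_r (1-u)). lra. field_simplify; lra. Qed.

Lemma toU x : 1 < x -> 0 < (x-1)/(x+1) < 1 /\ (1 + (x-1)/(x+1))/(1 - (x-1)/(x+1)) = x.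
Proof. intros hx. split; [split|].
 apply Rdiv_lt_0_compat; lra.
 apply (Rmult_lt_reg_r (x+1)). lra. field_simplify; lra.
 field. lra. Qed.

Lemma monoU x y : 1 < x < y -> (x-1)/(x+1) < (y-1)/(y+1).
Proof. intros h. apply (Rmult_lt_reg_r ((x+1)*(y+1))). nra. field_simplify; nra. Qed.

Lemma sol_x b z x : 1 < x -> Ef (z-1) b x = 0 -> mf_solution b z ((x-1)/(x+1)).
Proof. intros hx e. destruct (toU x hx) as [h1 h2]. split. lra.
 apply equiv. lra. rewrite h2. auto. Qed.

Lemma x_sol b z u : mf_solution b z u -> u = 0 \/ (0 < u /\ 1 < (1+u)/(1-u) /\
   Ef (z-1) b ((1+u)/(1-u)) = 0 /\ u = ((1+u)/(1-u) - 1)/((1+u)/(1-u) + 1)).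
Proof. intros [hu e]. destruct (toX u hu) as [h1 [h2 h3]].
 destruct (Req_dec u 0). left; auto. right. split. lra. split. apply h3; lra. split; auto.
 apply equiv; auto. Qed.

Theorem lemma5p5 (z : nat) (hz : (4 < z)%nat) :
  exists beta0 beta1 : R,
    0 < beta0 < beta1 /\
    (forall beta, 0 < beta < beta0 ->
       forall u, mf_solution beta z u -> u = 0) /\
    (forall beta, beta0 < beta < beta1 ->
       exists u1 u2, 0 < u1 < u2 /\ u2 < 1 /\
         mf_solution beta z u1 /\ mf_solution beta z u2 /\
         forall u, mf_solution beta z u -> u = 0 \/ u = u1 \/ u = u2) /\
    (forall beta, beta = beta0 \/ beta1 <= beta ->
       exists u2, 0 < u2 < 1 /\ mf_solution beta z u2 /\
         forall u, mf_solution beta z u -> u = 0 \/ u = u2).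
Proof. assert (hn : (4 <= z-1)%nat) by lia.
 destruct (core (z-1) hn) as [b0 [b1 [hb [H1 [H2 H3]]]]].
 exists b0, b1. split; auto. split; [|split].
 - intros b hbb u hu. destruct (x_sol b z u hu) as [h|[h1 [h2 [h3 h4]]]]; auto.
   exfalso. apply (H1 b hbb _ h2 h3).
 - intros b hbb. destruct (H2 b hbb) as [x1 [x2 [hx [e1 [e2 hall]]]]].
   exists ((x1-1)/(x1+1)), ((x2-1)/(x2+1)).
   destruct (toU x1 (proj1 hx)) as [u1 _]. destruct (toU x2 (ltac:(lra))) as [u2 _].
   split. split. lra. apply monoU; lra. split. lra.
   split. apply sol_x; auto; lra. split. apply sol_x; auto; lra.
   intros u hu. destruct (x_sol b z u hu) as [h|[h1 [h2 [h3 h4]]]]; auto.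
   destruct (hall _ h2 h3) as [e|e]; rewrite e in h4; auto.
 - intros b hbb. destruct (H3 b hbb) as [x2 [hx [e2 hall]]].
   exists ((x2-1)/(x2+1)). destruct (toU x2 hx) as [u2 _]. split; auto.
   split. apply sol_x; auto.
   intros u hu. destruct (x_sol b z u hu) as [h|[h1 [h2 [h3 h4]]]]; auto.
   right. rewrite (hall _ h2 h3) in h4. auto. Qed.
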